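(* MinPop Matching $g(\cdot),G(\cdot)$ can be computed recursively: $g(\varepsilon)=r$, $G(\varepsilon)=[\,]$; $g(\sharp)=r_\sharp$, $G(\sharp)=[\,]$. Otherwise write the string as $wc$ with last character $c$ and prefix $w$ (possibly $\varepsilon$ or $\sharp$), and let $u=g(w)$. Then $$g(wc)=h(u,c),\qquad G(wc)=G(w)+H(u,c).$$
   Context: Setting: WordPiece tokenization with vocabulary $V$ (a finite set of strings), suffix indicator string $\sharp$ (e.g. ''##'', possibly empty). A trie is built from $V$ with root $r$; $r_\sharp$ is the node representing $\sharp$. The trie may be augmented with two extra nodes representing $\sqcup$ and $\sharp\sqcup$, where $\sqcup$ is a whitespace character not in the vocabulary alphabet (these strings are not added to $V$). $\delta(u,c)$ is the child of $u$ along edge $c$, or null. $\chi_v$ is the string spelled from the root to node $v$; $\gamma_w$ is the node with $\chi_{\gamma_w}=w$, or null. The length of $w$ is $|w|$ if $w$ does not start with $\sharp$, else $|w|-|\sharp|$. $p_w$: longest (by this length) non-empty prefix $w'$ of $w$ with $w'\in V$, $w'\notin\{\varepsilon,\sharp\}$; if $w$ starts with $\sharp$, $p_w$ must also start with $\sharp$ (unless empty); $p_w=\varepsilon$ if none exists, and $p_\sharp=\varepsilon$. $q_w:=\sharp w''$ where $w=p_w w''$. MinPop Matching: $(g(w),G(w)) := (\gamma_w,[\,])$ if $\gamma_w\neq\mathrm{null}$; else $(\mathrm{null},[\,])$ if $p_w=\varepsilon$; else $(g(q_w),\,[p_w]+G(q_w))$. One-step MinPop Matching: $(h(u,c),H(u,c))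 := (\mathrm{null},[\,])$ if $u=\mathrm{null}$; otherwise $(g(\chi_u c),\,G(\chi_u c))$. *)

(* Defs.v *)
From mathcomp Require Import all_boot.
Set Implicit Arguments. Unset Strict Implicit. Unset Printing Implicit Defensive.

Section WordPiece.
Variables (T : eqType)
          (V : seq (seq T))
          (sharp : seq T)       (* suffix indicator, possibly empty *)
          (sp : T)
          (aug : bool).

(* Trie nodes are identified with the strings they spell (chi_v = v).
   The trie built from V (containing the node r_♯ for ♯) consists of all
   prefixes of words of V and of ♯; if aug, the nodes for ⊔ and ♯⊔ are added. *)
Definition trie_words : seq (seq T) :=
  sharp :: V ++ (if aug then [:: [:: sp]; rcons sharp sp] else [::]).

Definition isNode (w : seq T) : bool := has (prefix w) trie_words.

Definition gamma (w : seq T) : option (seq T) := if isNode w then Some w else None.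

Definition wlen (w : seq T) : nat :=
  if prefix sharp w then size w - size sharp else size w.

Definition p_cands (w : seq T) : seq (seq T) :=
  [seq w' <- [seq take i w | i <- iota 1 (size w)]
     | [&& w' \in V, w' != [::], w' != sharp
         & prefix sharp w ==> prefix sharp w'] ].

Definition p_of (w : seq T) : seq T :=
  if w == sharp then [::]
  else foldl (fun best x => if wlen best <= wlen x then x else best) [::] (p_cands w).

Definition q_of (w : seq T) : seq T := sharp ++ drop (size (p_of w)) w.

(* MinPop matching, computed with fuel; fuel (wlen w).+1 suffices since
   wlen (q_w) < wlen w whenever p_w <> ε. *)
Fixpoint gG_fuel (n : nat) (w : seq T) : option (seq T) * seq (seq T) :=
  match n with
  | 0 => (None, [::])
  | n'.+1 =>
    if isNode w then (gamma w, [::])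
    else let p := p_of w in
      if p == [::] then (None, [::])
      else let: (u, L) := gG_fuel n' (q_of w) in (u, p :: L)
  end.

Definition gG (w : seq T) : option (seq T) * seq (seq T) := gG_fuel (wlen w).+1 w.
Definition g (w : seq T) : option (seq T) := (gG w).1.
Definition G (w : seq T) : seq (seq T) := (gG w).2.

Definition hH (u : option (seq T)) (c : T) : option (seq T) * seq (seq T) :=
  match u with
  | None => (None, [::])
  | Some x => gG (rcons x c)
  end.
Definition h u c := (hH u c).1.
Definition H u c := (hH u c).2.

End WordPiece.

(* Main.v *)
Require Import Defs.
From mathcomp Require Import all_boot.
From mathcomp Require Import zify.

Section Proof.
Variables (T : eqType) (V : seq (seq T)) (sharp : seq T) (sp : T) (aug : bool).

Local Notation isNode := (isNode V sharp sp aug).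
Local Notation p_of := (p_of V sharp).
Local Notation q_of := (q_of V sharp).
Local Notation p_cands := (p_cands V sharp).
Local Notation wlen := (wlen sharp).
Local Notation gG_fuel := (gG_fuel V sharp sp aug).
Local Notation gG := (gG V sharp sp aug).

Lemma prefix_rconsE (s w : seq T) c :
  prefix s (rcons w c) = prefix s w || (s == rcons w c).
Proof.
elim: w s => [|y w IH] [|x s] //=; idtac.
  all: try (case: s => [|z s]; by rewrite /= ?orbF ?andbF ?eqxx /=). 
  by rewrite IH eqseq_cons; case: (x == y).
Qed.

Lemma isNode_rcons w c : isNode (rcons w c) -> isNode w.
Proof.
rewrite /Defs.isNode => /hasP [x xin px]; apply/hasP; exists x => //.
exact: prefix_trans (prefix_rcons w c) px.
Qed.

Lemma isNode_pre_sharp w : prefix w sharp -> isNode w.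
Proof. by move=> pw; rewrite /Defs.isNode /trie_words /= pw. Qed.

Lemma isNode_V w : w \in V -> isNode w.
Proof.
move=> wV; rewrite /Defs.isNode /trie_words /=; apply/orP; right.
by apply/hasP; exists w; rewrite ?mem_cat ?wV ?prefix_refl.
Qed.

Lemma foldl_in (f : seq T -> seq T -> seq T) x0 s :
  (forall a b, f a b = a \/ f a b = b) -> foldl f x0 s \in x0 :: s.
Proof.
move=> Hf; elim: s x0 => [|y s IH] x0 /=; first by rewrite inE eqxx.
have := IH (f x0 y); rewrite !inE; case: (Hf x0 y) => ->.
- by case/orP => [->|->]; rewrite ?orbT.
- by case/orP => [/eqP->|->]; rewrite ?eqxx ?orbT.
Qed.

Lemma p_of_in w : p_of w = [::] \/ p_of w \in p_cands w.
Proof.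
rewrite /Defs.p_of; case: eqP => _; first by left.
set f := (fun _ _ => _).
have Hf : forall a b, f a b = a \/ f a b = b.
  by move=> a b; rewrite /f; case: ifP; auto.
have := @foldl_in f [::] (p_cands w) Hf.
rewrite inE; case/orP.
- by move/eqP; left.
- by right.
Qed.

Lemma p_cands_mem w x : x \in p_cands w ->
  [/\ exists2 i, 0 < i <= size w & x = take i w, x \in V, x != [::], x != sharp
     & prefix sharp w ==> prefix sharp x].
Proof.
rewrite mem_filter => /andP [/and4P [a b c d]] /mapP [i].
rewrite mem_iota => /andP [i1 i2] E; split => //; exists i => //.
by rewrite i1 /=; rewrite add1n ltnS in i2.
Qed.

Lemma size_p_of w : size (p_of w) <= size w.
Proof.
case: (p_of_in w) => [->//|/p_cands_mem [[i /andP [_ i2] ->] _ _ _ _]].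
by rewrite size_take; case: ifP => // /ltnW.
Qed.

Lemma wlen_q w : p_of w != [::] -> wlen (q_of w) < wlen w.
Proof.
move=> ne; case: (p_of_in w) => [E|]; first by rewrite E in ne.
move/p_cands_mem => [[i /andP [i0 i2] E] _ xne xsh pre].
have sx : size (p_of w) = i by rewrite E size_takel.
rewrite /q_of /Defs.wlen prefix_prefix size_cat addKn size_drop sx.
case: ifP pre => /= ps; last by lia.
move=> pt.
have Hs : size sharp < i.
  rewrite -sx ltn_neqAle; apply/andP; split.
    apply/negP => /eqP Es; move: pt; rewrite prefixE Es take_size => /eqP Ex.
    by move: xsh; rewrite Ex eqxx.
  by move/prefixP: pt => [s' ->]; rewrite size_cat leq_addr.
lia.
Qed.

Lemma fuel_eq n m w : wlen w < n -> wlen w < m -> gG_fuel n w = gG_fuel m w.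
Proof.
elim: n m w => [//|n IH] [//|m] w Hn Hm /=.
case: ifP => // _; case: ifP => // /negbT ne.
have Hq := @wlen_q w ne.
by rewrite (IH m) //; lia.
Qed.

Lemma fuelE n w : wlen w < n -> gG_fuel n w = gG w.
Proof. by move=> Hn; apply: fuel_eq. Qed.

Lemma gG_unfold w : gG w =
  if isNode w then (Some w, [::])
  else if p_of w == [::] then (None, [::])
  else ((gG (q_of w)).1, p_of w :: (gG (q_of w)).2).
Proof.
rewrite {1}/Defs.gG /= /gamma; case Hn: (isNode w) => //; case: ifP => // /negbT ne.
by rewrite fuelE ?wlen_q //; case: (gG _).
Qed.

Lemma p_of_rcons w c : ~~ isNode w -> rcons w c != sharp ->
  p_of (rcons w c) = p_of w.
Proof.
move=> nw nsh.
have wsh : (w == sharp) = false.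
  by apply/negbTE/eqP => E; move: nw; rewrite isNode_pre_sharp // E prefix_refl.
have Hp : prefix sharp (rcons w c) = prefix sharp w.
  by rewrite prefix_rconsE eq_sym (negbTE nsh) orbF.
rewrite /Defs.p_of wsh (negbTE nsh); congr foldl.
rewrite /Defs.p_cands size_rcons -[(size w).+1]addn1 iotaD map_cat filter_cat /= Hp.
rewrite take_oversize ?size_rcons ?add1n //.
have -> : (rcons w c \in V) = false.
  apply/negbTE/negP => /isNode_V /isNode_rcons; exact/negP.
rewrite /= cats0; congr (filter _ _).
apply/eq_in_map => i.
rewrite mem_iota add1n ltnS => /andP [_ hi].
rewrite -cats1 take_cat; case: ltnP => // hi2.
have -> : i = size w by apply/eqP; rewrite eqn_leq hi hi2.
by rewrite subnn take0 cats0 take_size.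
Qed.

Lemma main_rec w c : rcons w c != sharp ->
  gG (rcons w c) = ((hH V sharp sp aug (gG w).1 c).1,
                    (gG w).2 ++ (hH V sharp sp aug (gG w).1 c).2).
Proof.
move: {2}(wlen w).+1 (ltnSn (wlen w)) => n.
elim: n w => [//|n IH] w Hn nsh.
case Hw: (isNode w).
  rewrite (gG_unfold w) Hw /=; by case: (gG _).
have Hw' : isNode (rcons w c) = false.
  by apply/negbTE/negP => /isNode_rcons; rewrite Hw.
rewrite (gG_unfold (rcons w c)) (gG_unfold w) Hw Hw' p_of_rcons ?Hw //.
case: ifP => // /negbT ne.
have -> : q_of (rcons w c) = rcons (q_of w) c.
  by rewrite /q_of p_of_rcons ?Hw // drop_rcons ?size_p_of // rcons_cat.
rewrite IH //=.
  have := @wlen_q w ne; lia.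
apply/negP => /eqP E; have := congr1 size E.
by rewrite size_rcons /q_of size_cat; lia.
Qed.

End Proof.

Theorem lemma3 (T : eqType) (V : seq (seq T)) (sharp : seq T) (sp : T) (aug : bool)
  (sp_notin_V : forall v, v \in V -> sp \notin v)
  (sp_notin_sharp : sp \notin sharp) :
  (g V sharp sp aug [::] = Some [::] /\ G V sharp sp aug [::] = [::]) /\
  (g V sharp sp aug sharp = Some sharp /\ G V sharp sp aug sharp = [::]) /\
  (forall (w : seq T) (c : T), rcons w c <> sharp ->
     g V sharp sp aug (rcons w c) = h V sharp sp aug (g V sharp sp aug w) c /\
     G V sharp sp aug (rcons w c)
       = G V sharp sp aug w ++ H V sharp sp aug (g V sharp sp aug w) c).
Proof.
split; [|split].
- by rewrite /g /G gG_unfold isNode_pre_sharp // prefix0s.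
- by rewrite /g /G gG_unfold isNode_pre_sharp // prefix_refl.
- move=> w c /eqP nsh.
  by rewrite /g /G /h /H main_rec.
Qed.
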